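(* Consider the SSBM in the context, let $\tau^+>0$, $\tau^-\ge0$, and assume $d_i^\pm>0$ for all $i\in[k]$. Let $V^\perp\in\mathbb R^{n\times(n-k)}$ have orthonormal columns spanning the orthogonal complement of the column span of $\Theta$, chosen so that exactly $n_i-1$ of its columns are supported on $C_i$ for each $i$ (these are eigenvectors of $\mathbb E D^+$), with the columns ordered cluster by cluster. Then $$\bar T=\begin{bmatrix}\Theta R& V^\perp\end{bmatrix}\begin{bmatrix}\Lambda\\&\frac{\alpha_1^+}{\alpha_1^-}I_{n_1-1}\\&&\ddots\\&&&\frac{\alpha_k^+}{\alpha_k^-}I_{n_k-1}\end{bmatrix}\begin{bmatrix}(\Theta R)^\top\\(V^\perp)^\top\end{bmatrix},$$ where $R$ is a $k\times k$ rotation matrix and $\Lambda$ a diagonal matrix such that $(C^-)^{-1/2}C^+(C^-)^{-1/2}=R\Lambda R^\top$.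
   Context: SSBM: integers $n\ge2,k\ge2$, $p\in(0,1]$, $\eta\in[0,1/2)$, partition of $[n]$ into nonempty clusters $C_1,\dots,C_k$, $|C_i|=n_i$. Independently for each pair $j\ne j'$ an edge is present w.p. $p$, signed $+1$ if same cluster and $-1$ otherwise, then flipped independently w.p. $\eta$. $A^+,A^-$ are the 0/1 adjacency matrices of positive and negative edges, $D^\pm=\mathrm{diag}(A^\pm\mathbf1)$. $\Theta_{ji}=1/\sqrt{n_i}$ if $j\in C_i$ else 0. $\overline{L^\pm_{sym}}=I-(\mathbb ED^\pm)^{-1/2}\mathbb EA^\pm(\mathbb ED^\pm)^{-1/2}$, $\bar T=(\overline{L^-_{sym}}+\tau^+I)^{-1/2}(\overline{L^+_{sym}}+\tau^-I)(\overline{L^-_{sym}}+\tau^+I)^{-1/2}$. Expected degrees of a node in $C_i$: $d_i^+=p(n(s_i(1-2\eta)+\eta)-(1-\eta))$, $d_i^-=p(n(-s_i(1-2\eta)+(1-\eta))-\eta)$ with $s_i=n_i/n$. $u^\pm=(\sqrt{n_1/d_1^\pm},\dots,\sqrt{n_k/d_k^\pm})^\top$, $\alpha_i^+=1+\tau^-+p(1-\eta)/d_i^+$, $\alpha_i^-=1+\tau^++p\eta/d_i^-$. $C^+=-p\eta u^+(u^+)^\top+\mathrm{diag}_i\big(1+\tau^-+\frac{p}{d_i^+}(1-\eta-n_i(1-2\eta))\big)$, $C^-=-p(1-\eta)u^-(u^-)^\top+\mathrm{diag}_i\big(1+\tau^++\frac p{d_i^-}(\eta+n_i(1-2\eta))\big)$.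 *)

(* Defs.v *)
From HB Require Import structures.
From mathcomp Require Import all_boot all_order all_algebra.
From mathcomp Require Import reals.
From Stdlib Require Import ClassicalEpsilon.
Import Order.TTheory GRing.Theory Num.Theory.
Local Open Scope ring_scope.

Section SSBM.
Context {R : realType}.

Definition psdmx {m : nat} (S : 'M[R]_m) : Prop :=
  forall v : 'cV[R]_m, 0 <= (v^T *m S *m v) 0 0.

(** Principal square root: the (unique, when it exists) symmetric PSD S with
    S * S = A; selected by classical choice. *)
Definition sqrtmx {m : nat} (A : 'M[R]_m) : 'M[R]_m :=
  epsilon (inhabits 0) (fun S : 'M[R]_m => [/\ S^T = S, psdmx S & S *m S = A]).

Definition invsqrtmx {m : nat} (A : 'M[R]_m) : 'M[R]_m := invmx (sqrtmx A).

Context {n k : nat} (c : 'I_n -> 'I_k) (p eta : R).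

Definition csize (i : 'I_k) : nat := #|[set j | c j == i]|.

(** Expected adjacency matrices (each entry is the probability of the
    corresponding signed edge; no self-loops). *)
Definition EAp : 'M[R]_n := \matrix_(j, j')
  (if j == j' then 0 else if c j == c j' then p * (1 - eta) else p * eta).
Definition EAm : 'M[R]_n := \matrix_(j, j')
  (if j == j' then 0 else if c j == c j' then p * eta else p * (1 - eta)).

Definition degmx (A : 'M[R]_n) : 'M[R]_n := diag_mx (\row_j \sum_j' A j j').
Definition EDp : 'M[R]_n := degmx EAp.
Definition EDm : 'M[R]_n := degmx EAm.

Definition Lbar (A D : 'M[R]_n) : 'M[R]_n :=
  1%:M - invsqrtmx D *m A *m invsqrtmx D.
Definition Lbarp : 'M[R]_n := Lbar EAp EDp.
Definition Lbarm : 'M[R]_n := Lbar EAm EDm.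

Definition Tbar (taup taum : R) : 'M[R]_n :=
  invsqrtmx (Lbarm + taup%:M) *m (Lbarp + taum%:M) *m invsqrtmx (Lbarm + taup%:M).

Definition Theta : 'M[R]_(n, k) := \matrix_(j, i)
  (if c j == i then (Num.sqrt (csize i)%:R)^-1 else 0).

Definition sfrac (i : 'I_k) : R := (csize i)%:R / n%:R.
Definition dp (i : 'I_k) : R :=
  p * (n%:R * (sfrac i * (1 - 2 * eta) + eta) - (1 - eta)).
Definition dm (i : 'I_k) : R :=
  p * (n%:R * (- sfrac i * (1 - 2 * eta) + (1 - eta)) - eta).

Definition up : 'cV[R]_k := \col_i Num.sqrt ((csize i)%:R / dp i).
Definition um : 'cV[R]_k := \col_i Num.sqrt ((csize i)%:R / dm i).

Definition alphap (taum : R) (i : 'I_k) : R := 1 + taum + p * (1 - eta) / dp i.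
Definition alpham (taup : R) (i : 'I_k) : R := 1 + taup + p * eta / dm i.

Definition Cp (taum : R) : 'M[R]_k :=
  - (p * eta) *: (up *m up^T)
  + diag_mx (\row_i (1 + taum + p / dp i * (1 - eta - (csize i)%:R * (1 - 2 * eta)))).
Definition Cm (taup : R) : 'M[R]_k :=
  - (p * (1 - eta)) *: (um *m um^T)
  + diag_mx (\row_i (1 + taup + p / dm i * (eta + (csize i)%:R * (1 - 2 * eta)))).

End SSBM.

(* Main.v *)
Require Import Defs.
From HB Require Import structures.
From mathcomp Require Import all_boot all_order all_algebra.
From mathcomp Require Import reals.
From mathcomp Require Import complex.
From mathcomp Require Import ring lra.
From Stdlib Require Import ClassicalEpsilon.
Import Order.TTheory GRing.Theory Num.Theory.
Local Open Scope ring_scope.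

Section Gen.
Variable R : realType.
Implicit Types (m : nat).

Lemma cV_sq m (v : 'cV[R]_m) : (v^T *m v) 0 0 = \sum_i v i 0 ^+ 2.
Proof. by rewrite mxE; apply: eq_bigr => i _; rewrite mxE expr2. Qed.

Lemma cV_sq_ge0 m (v : 'cV[R]_m) : 0 <= (v^T *m v) 0 0.
Proof. by rewrite cV_sq; apply: sumr_ge0 => i _; apply: sqr_ge0. Qed.

Lemma cV_sq_eq0 m (v : 'cV[R]_m) : (v^T *m v) 0 0 = 0 -> v = 0.
Proof.
rewrite cV_sq => /eqP; rewrite psumr_eq0; last by move=> i _; apply: sqr_ge0.
move=> /allP H; apply/matrixP => i j; rewrite ord1 mxE.
by have := H i (mem_index_enum _); rewrite /= sqrf_eq0 => /eqP.
Qed.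

Lemma addE00 (A B : 'M[R]_1) : (A + B) 0 0 = A 0 0 + B 0 0.
Proof. by rewrite mxE. Qed.
Lemma scaleE00 a (A : 'M[R]_1) : (a *: A) 0 0 = a * A 0 0.
Proof. by rewrite mxE. Qed.

Lemma quad_sym m (S : 'M[R]_m) (x y : 'cV_m) : S^T = S ->
  (x^T *m S *m y) 0 0 = (y^T *m S *m x) 0 0.
Proof.
move=> hS; transitivity (((y^T *m S *m x)^T) 0 0); last by rewrite mxE.
by rewrite !trmx_mul trmxK hS mulmxA.
Qed.

Lemma psd_null m (S : 'M[R]_m) (x : 'cV_m) : S^T = S -> psdmx S ->
  (x^T *m S *m x) 0 0 = 0 -> S *m x = 0.
Proof.
move=> hS hP hx.
have key : forall y : 'cV_m, (y^T *m S *m x) 0 0 = 0.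
  move=> y; set a := (y^T *m S *m x) 0 0; set b := (y^T *m S *m y) 0 0.
  have hb : 0 <= b by apply: hP.
  have exp : forall t, ((x + t *: y)^T *m S *m (x + t *: y)) 0 0 = 2 * t * a + t ^+ 2 * b.
    move=> t.
    have -> : (x + t *: y)^T = x^T + t *: y^T by apply/matrixP=> i j; rewrite !mxE.
    rewrite !mulmxDl !mulmxDr -!scalemxAl -!scalemxAr.
    rewrite !addE00 !scaleE00.
    have -> : (x^T *m S *m y) 0 0 = a by apply: quad_sym.
    rewrite -/b -/a; move: hx; rewrite /= => ->.
    ring.
  pose e := b + 1; have he : 0 < e by rewrite /e; lra.
  pose t := - a / e.
  have te : t * e = - a by rewrite /t mulfVK // gt_eqF.
  have := hP (x + t *: y); rewrite exp => H.
  have bE : b = e - 1 by rewrite /e; ring.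
  rewrite bE in H.
  have t0 : t = 0 by nra.
  by move: te; rewrite t0 mul0r => /eqP; rewrite eq_sym oppr_eq0 => /eqP.
apply: cV_sq_eq0; rewrite -(key (S *m x)); by rewrite mulmxA.
Qed.

Lemma entry_quad m (D S : 'M[R]_m) j : (D^T *m S *m D) j j = ((col j D)^T *m S *m col j D) 0 0.
Proof.
rewrite !mxE; apply: eq_bigr => k _; rewrite !mxE; congr (_ * _).
by apply: eq_bigr => l _; rewrite !mxE.
Qed.

Lemma sqrt_uniq m (S1 S2 : 'M[R]_m) : S1^T = S1 -> psdmx S1 -> S2^T = S2 -> psdmx S2 ->
  S1 *m S1 = S2 *m S2 -> S1 = S2.
Proof.
move=> h1 p1 h2 p2 e.
pose D := S1 - S2.
have hD : D^T = D.
  by rewrite /D -[in RHS]h1 -[in RHS]h2; apply/matrixP=> i j; rewrite !mxE.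
have E : S1 *m D + D *m S2 = 0.
  by rewrite /D mulmxBr mulmxBl e addrA subrK subrr.
have E2 : D *m S1 *m D + D *m D *m S2 = 0.
  by rewrite -!mulmxA -mulmxDr E mulmx0.
have tr0 : \tr (D^T *m S1 *m D) + \tr (D^T *m S2 *m D) = 0.
  rewrite hD -[\tr (D *m S2 *m D)]mxtrace_mulC [D *m (D *m S2)]mulmxA -mxtraceD E2.
  by rewrite mxtrace0.
have g1 : forall S, psdmx S -> 0 <= \tr (D^T *m S *m D).
  by move=> S pS; apply: sumr_ge0 => j _; rewrite entry_quad; apply: pS.
have z1 : \tr (D^T *m S1 *m D) = 0.
  by have := g1 _ p1; have := g1 _ p2; lra.
have z2 : \tr (D^T *m S2 *m D) = 0.
  by have := g1 _ p1; have := g1 _ p2; lra.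
have nul : forall S, S^T = S -> psdmx S -> \tr (D^T *m S *m D) = 0 -> S *m D = 0.
  move=> S hS pS /eqP; rewrite psumr_eq0; last first.
    by move=> j _; rewrite entry_quad; apply: pS.
  move=> /allP H; apply/matrixP => i j.
  have := H j (mem_index_enum _); rewrite /= entry_quad => /eqP /(psd_null _ _ _ hS pS).
  move/matrixP => /(_ i 0) h.
  have -> : (S *m D) i j = (S *m col j D) i 0.
    by rewrite !mxE; apply: eq_bigr => l _; rewrite /col [in RHS]mxE.
  by rewrite h !mxE.
have DD : D^T *m D = 0.
  by rewrite {1}hD {1}/D mulmxBl (nul _ h1 p1 z1) (nul _ h2 p2 z2) subrr.
apply/eqP; rewrite -subr_eq0; apply/eqP; apply/matrixP => i j.
have : col j D = 0.
  apply: cV_sq_eq0; rewrite -(mulmx1 (col j D)^T) -entry_quad mulmx1 DD.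
  by rewrite !mxE.
by move/matrixP => /(_ i 0); rewrite !mxE.
Qed.

End Gen.

Section Sq.
Variable R : realType.
Implicit Types (m : nat).
Lemma sqrtmx_eq m (A S : 'M[R]_m) : S^T = S -> psdmx S -> S *m S = A -> sqrtmx A = S.
Proof.
move=> h1 h2 h3.
have := @epsilon_spec _ (inhabits 0) (fun S : 'M[R]_m => [/\ S^T = S, psdmx S & S *m S = A]).
case; first by exists S.
move=> e1 e2 e3; apply: sqrt_uniq => //; by rewrite e3.
Qed.
End Sq.


Section Gen.
Variable R : realType.

Lemma interp (F : R -> R) (s : seq R) :
  exists q : {poly R}, forall x, x \in s -> q.[x] = F x.
Proof.
elim: s => [|a s [q Hq]]; first by exists 0.
have [as_|nas] := boolP (a \in s).
  by exists q => x; rewrite inE => /orP[/eqP->|]; [apply: Hq|apply: Hq].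
pose r := \prod_(y <- s) ('X - y%:P).
have r0 : forall y, y \in s -> r.[y] = 0.
  move=> y ys; rewrite horner_prod; apply/eqP; rewrite prodf_seq_eq0.
  by apply/hasP; exists y => //; rewrite !hornerE subrr.
have ra : r.[a] != 0.
  rewrite horner_prod prodf_seq_neq0; apply/allP => y ys /=.
  rewrite !hornerE subr_eq0; apply: contra nas => /eqP ->; done.
exists (q + ((F a - q.[a]) / r.[a]) *: r) => x; rewrite inE => /orP[/eqP->|xs].
  by rewrite hornerD hornerZ mulfVK // addrC subrK.
by rewrite hornerD hornerZ (r0 x xs) mulr0 addr0 Hq.
Qed.

Lemma horner_mx_sym m (A : 'M[R]_m.+1) (q : {poly R}) : A^T = A ->
  (horner_mx A q)^T = horner_mx A q.
Proof.
move=> hA; elim/poly_ind: q => [|q c IH]; first by rewrite rmorph0 trmx0.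
rewrite rmorphD rmorphM /= horner_mx_X horner_mx_C.
rewrite raddfD /= tr_scalar_mx -mulmxE trmx_mul IH hA.
congr (_ + _); have := @comm_horner_mx _ _ A A q (erefl _).
by rewrite /comm_mx.
Qed.

Lemma sqrt_exists m (A : 'M[R]_m) : A^T = A -> psdmx A ->
  exists S : 'M[R]_m, [/\ S^T = S, psdmx S & S *m S = A].
Proof.
case: m A => [|m] A hA pA.
  exists 0; split; first by rewrite trmx0.
    by move=> v; rewrite mulmx0 mul0mx mxE.
  by apply/matrixP => [[]].
pose AC := map_mx (real_complex R) A.
have hAC : AC \is hermsymmx.
  apply: realsym_hermsym.
    apply/is_hermitianmxP; rewrite expr0 scale1r.
    apply/matrixP => i j; rewrite !mxE.
    by rewrite -[in RHS]hA mxE.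
  apply/mxOverP => i j; apply/complex_realP; exists (A i j); by rewrite mxE.
have /orthomx_spectralP PE := hermitian_normalmx hAC.
set P := spectralmx AC in PE; set d := spectral_diag AC in PE.
have Pu : P \in unitmx := spectral_unit AC.
have dreal := hermitian_spectral_diag_real hAC.
pose mu j := complex.Re (d 0 j).
have hmu : forall j, real_complex R (mu j) = d 0 j.
  by move=> j; apply: RRe_real; apply: (mxOverP dreal).
have ev : forall j, eigenvalue AC (d 0 j).
  move=> j; apply/eigenvalueP; exists (row j P).
    have ed : (delta_mx 0 j : 'rV_m.+1) *m diag_mx d = d 0 j *: delta_mx 0 j.
      rewrite mul_mx_diag; apply/matrixP => a b; rewrite !mxE.
      case: (eqVneq b j) => [->|nb]; first by rewrite mulrC.
      by rewrite andbF mul0r mulr0.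
    by rewrite {1}PE rowE !mulmxA mulmxK // ed -scalemxAl.
  apply/eqP => /(congr1 (mulmx^~ (invmx P))); rewrite rowE mulmxK // mul0mx.
  by move/matrixP => /(_ 0 j); rewrite !mxE !eqxx /= => /eqP; rewrite oner_eq0.
have mu0 : forall j, 0 <= mu j.
  move=> j; have := ev j; rewrite -hmu eigenvalue_map => /eigenvalueP [v hv vn0].
  have := pA v^T; rewrite trmxK hv -scalemxAl mxE.
  have vpos : 0 < (v *m v^T) 0 0.
    rewrite lt_def; apply/andP; split.
      apply/eqP => h.
      have : v^T = 0 by apply: cV_sq_eq0; rewrite trmxK.
      by move/(congr1 trmx); rewrite trmxK trmx0 => v0; rewrite v0 eqxx in vn0.
    by have := cV_sq_ge0 _ _ v^T; rewrite trmxK.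
  by rewrite pmulr_lge0.
have [q hq] := interp (fun x => Num.sqrt (Num.sqrt x)) [seq mu j | j <- enum 'I_m.+1].
have hq' : forall j, q.[mu j] = Num.sqrt (Num.sqrt (mu j)).
  by move=> j; apply: hq; apply: map_f; rewrite mem_enum.
pose T := horner_mx A q.
have Tsym : T^T = T by apply: horner_mx_sym.
exists (T *m T); split.
- by rewrite trmx_mul Tsym.
- move=> v.
  have -> : v^T *m (T *m T) *m v = (T *m v)^T *m (T *m v).
    by rewrite trmx_mul Tsym !mulmxA.
  by apply: cV_sq_ge0.
apply: (map_mx_inj (f := real_complex R)).
rewrite !map_mxM.
pose q' := map_poly (real_complex R) q.
pose e := \row_j q'.[d 0 j].
have TE : map_mx (real_complex R) T = invmx P *m diag_mx e *m P.
  rewrite /T map_horner_mx -/AC PE (horner_mx_uconjC _ _ Pu) -/q'.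
  have dE : map_mx (horner q') d = e by apply/matrixP => a b; rewrite [a]ord1 !mxE.
  by rewrite horner_mx_diag dE.
have e4 : forall j, (e 0 j) ^+ 4 = d 0 j.
  move=> j; rewrite mxE -hmu /q' horner_map /= hq' -rmorphXn /=.
  congr (real_complex R _).
  by rewrite (_ : 4 = 2 * 2)%N // exprM !sqr_sqrtr // sqrtr_ge0.
rewrite TE.
have cj : forall X Y : 'M_m.+1, invmx P *m X *m P *m (invmx P *m Y *m P) = invmx P *m (X *m Y) *m P.
  by move=> X Y; rewrite !mulmxA mulmxK // !mulmxA.
rewrite !cj -/AC PE !mulmx_diag; congr (_ *m diag_mx _ *m _).
clearbody e; apply/matrixP => a b; rewrite !mxE [a]ord1 -(e4 b).
by rewrite !exprS expr0 mulr1 !mulrA.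
Qed.
End Gen.


Section Clu.
Variables (R : realType) (n k : nat) (c : 'I_n -> 'I_k).

Definition Zm : 'M[R]_(n, k) := \matrix_(j, i) (c j == i)%:R.
Definition EAg (x y : R) : 'M[R]_n := \matrix_(j, j')
  (if j == j' then 0 else if c j == c j' then x else y).
Definition Kg (x y : R) : 'M[R]_k := (x - y) *: 1%:M + y *: const_mx 1.

Lemma sum_ind (f : 'I_k -> R) j : \sum_i (c j == i)%:R * f i = f (c j).
Proof.
rewrite (bigD1 (c j)) //= eqxx mul1r big1 ?addr0 // => i ni.
by rewrite eq_sym (negbTE ni) mul0r.
Qed.

Lemma sum_ind' (f : 'I_k -> R) j : \sum_i f i * (c j == i)%:R = f (c j).
Proof. by rewrite -(sum_ind f j); apply: eq_bigr => i _; rewrite mulrC. Qed.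

Lemma csizeE i : ((csize c i)%:R : R) = \sum_j (c j == i)%:R.
Proof.
rewrite /csize -sum1_card big_mkcond /= natr_sum; apply: eq_bigr => j _.
by rewrite inE; case: (c j == i).
Qed.

Lemma sum_part (f : 'I_k -> R) : \sum_j f (c j) = \sum_i (csize c i)%:R * f i.
Proof.
under eq_bigr => j _ do rewrite -(sum_ind f j).
rewrite exchange_big /=; apply: eq_bigr => i _.
by rewrite csizeE mulr_suml.
Qed.

Lemma sum_csize : \sum_i ((csize c i)%:R : R) = n%:R.
Proof.
have := sum_part (fun _ => 1); rewrite sumr_const card_ord.
under [RHS]eq_bigr => i _ do rewrite mulr1.
by move=> <-.
Qed.

Lemma csize_pos (hc : forall i, exists j, c j = i) i : (0 < csize c i)%N.
Proof.
have [j hj] := hc i; rewrite /csize card_gt0; apply/set0Pn; exists j.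
by rewrite inE hj.
Qed.

Lemma ZtZ : Zm^T *m Zm = diag_mx (\row_i ((csize c i)%:R : R)).
Proof.
apply/matrixP => a b; rewrite !mxE csizeE.
under eq_bigr => j _ do rewrite !mxE.
case: (eqVneq a b) => [<-|nab]; rewrite ?mulr1n ?mulr0n.
  by apply: eq_bigr => j _; case: (c j == a); rewrite ?mulr1 ?mulr0.
apply: big1 => j _; case: (eqVneq (c j) a) => [e|ne]; last by rewrite mul0r.
by rewrite e (negbTE nab) mulr0.
Qed.

Lemma diagZ (s : 'I_k -> R) :
  diag_mx (\row_j s (c j)) *m Zm = Zm *m diag_mx (\row_i s i).
Proof.
rewrite mul_diag_mx mul_mx_diag; apply/matrixP => a b; rewrite !mxE.
by case: (eqVneq (c a) b) => [->|ne]; rewrite ?mulr1 ?mul1r ?mulr0 ?mul0r.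
Qed.

Lemma EA_Z x y : EAg x y = Zm *m Kg x y *m Zm^T - x%:M.
Proof.
apply/matrixP => j j'; rewrite !mxE.
under eq_bigr => a _ do rewrite !mxE.
rewrite sum_ind'.
under eq_bigr => a _ do rewrite !mxE.
rewrite (sum_ind (fun a => (x - y) * (a == c j')%:R + y * 1)).
case: (eqVneq j j') => [<-|nj]; first by rewrite eqxx /= mulr1n; ring.
rewrite mulr0n subr0; case: (eqVneq (c j) (c j')) => [_|ne] /=; first by ring.
by ring.
Qed.

Lemma Theta_Z : Theta c = Zm *m diag_mx (\row_i (Num.sqrt (csize c i)%:R)^-1).
Proof.
rewrite mul_mx_diag; apply/matrixP => a b; rewrite !mxE.
by case: (c a == b); rewrite ?mul1r ?mul0r.
Qed.

Lemma rowsum x y j : \sum_j' EAg x y j j' =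
  ((csize c (c j))%:R - 1) * x + (n%:R - (csize c (c j))%:R) * y.
Proof.
rewrite EA_Z.
under eq_bigr => j' _ do rewrite !mxE.
rewrite sumrB.
have -> : \sum_i x *+ (j == i) = x.
  rewrite (bigD1 j) //= big1 ?addr0; first by rewrite eqxx mulr1n.
  by move=> i ni; rewrite eq_sym (negbTE ni) mulr0n.
have -> : \sum_j' \sum_a (Zm *m Kg x y) j a * Zm^T a j' = \sum_j' (Kg x y) (c j) (c j').
  apply: eq_bigr => j' _.
  under eq_bigr => a _ do rewrite !mxE.
  rewrite sum_ind'; rewrite mxE.
  under eq_bigr => a _ do rewrite !mxE.
  by rewrite (sum_ind (fun a => (x - y) * (a == c j')%:R + y * 1)) /Kg !mxE.
rewrite (sum_part (fun b => Kg x y (c j) b)).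
rewrite (bigD1 (c j)) //=.
under eq_bigr => i ni do rewrite /Kg !mxE eq_sym (negbTE ni) mulr0n mulr0 add0r mulr1.
rewrite /Kg !mxE eqxx mulr1 mulr1n -mulr_suml.
have : \sum_(i | i != c j) ((csize c i)%:R : R) = n%:R - (csize c (c j))%:R.
  by rewrite -sum_csize [in RHS](bigD1 (c j)) //= addrC addrK.
move=> ->; ring.
Qed.

End Clu.
Arguments Zm {R n k} c.
Arguments EAg {R n k} c x y.
Arguments Kg {R k} x y.


Section Mx.
Variable R : realType.

Lemma inv_eq m (A B : 'M[R]_m) : A *m B = 1%:M -> invmx A = B.
Proof.
move=> h; have [Au _] := mulmx1_unit h.
by rewrite -[invmx A]mulmx1 -h mulKmx.
Qed.

Lemma psd_diag m (r : 'rV[R]_m) : (forall j, 0 <= r 0 j) -> psdmx (diag_mx r).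
Proof.
move=> H v; rewrite mul_mx_diag mxE; apply: sumr_ge0 => j _; rewrite !mxE.
have := H j; nra.
Qed.

Lemma sqrtmx_diag m (r : 'rV[R]_m) : (forall j, 0 <= r 0 j) ->
  sqrtmx (diag_mx r) = diag_mx (\row_j Num.sqrt (r 0 j)).
Proof.
move=> H; apply: sqrtmx_eq.
- by rewrite tr_diag_mx.
- by apply: psd_diag => j; rewrite mxE sqrtr_ge0.
rewrite mulmx_diag; congr diag_mx; apply/matrixP => a b.
by rewrite [a]ord1 !mxE -expr2 sqr_sqrtr.
Qed.

Lemma invmx_diag m (s : 'rV[R]_m) : (forall j, s 0 j != 0) ->
  invmx (diag_mx s) = diag_mx (\row_j (s 0 j)^-1).
Proof.
move=> H; apply: inv_eq; rewrite mulmx_diag; apply/matrixP => a b.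
rewrite !mxE; case: (eqVneq a b) => [->|nab]; last by rewrite !mulr0n.
by rewrite !mulr1n divff.
Qed.
End Mx.

Section Lap.
Variables (R : realType) (n k : nat) (c : 'I_n -> 'I_k).

Definition Dh (dd : 'I_k -> R) : 'M[R]_n := diag_mx (\row_j (Num.sqrt (dd (c j)))^-1).

Lemma invsqrt_deg x y (dd : 'I_k -> R) : (forall i, 0 < dd i) ->
  (forall j, \sum_j' EAg c x y j j' = dd (c j)) ->
  invsqrtmx (degmx (EAg c x y)) = Dh dd.
Proof.
move=> hd hr; rewrite /invsqrtmx /degmx.
have -> : \row_j \sum_j' EAg c x y j j' = \row_j dd (c j).
  by apply/matrixP => a b; rewrite !mxE hr.
rewrite sqrtmx_diag; last by move=> j; rewrite mxE ltW.
rewrite invmx_diag; last by move=> j; rewrite !mxE sqrtr_eq0 -ltNge.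
by rewrite /Dh; congr diag_mx; apply/matrixP => a b; rewrite !mxE.
Qed.

Lemma zmod_rearr (V : zmodType) (i t a b : V) : i - (a - b) + t = (i + t) + b - a.
Proof.
rewrite opprB addrA -!addrA; congr (_ + _).
by rewrite (addrC (-a) t) addrCA.
Qed.

Lemma Mform x y (dd : 'I_k -> R) tau : (forall i, 0 < dd i) ->
  (forall j, \sum_j' EAg c x y j j' = dd (c j)) ->
  Lbar (EAg c x y) (degmx (EAg c x y)) + tau%:M =
  (1 + tau)%:M + x *: (Dh dd *m Dh dd) - Dh dd *m Zm c *m Kg x y *m (Zm c)^T *m Dh dd.
Proof.
move=> hd hr; rewrite /Lbar (invsqrt_deg _ _ _ hd hr) EA_Z.
rewrite mulmxBr mulmxBl mul_mx_scalar -scalemxAl !mulmxA.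
have -> : (1 + tau)%:M = (1%:M + tau%:M : 'M[R]_n).
  by apply/matrixP => i j; rewrite !mxE mulrnDl.
by rewrite zmod_rearr.
Qed.

Lemma MTheta x y (dd : 'I_k -> R) tau (C : 'M[R]_k) :
  (forall i, exists j, c j = i) -> (forall i, 0 < dd i) ->
  (forall j, \sum_j' EAg c x y j j' = dd (c j)) ->
  (forall a b, C a b = (a == b)%:R * (1 + tau + (x - (csize c a)%:R * (x - y)) / dd a)
        - y * Num.sqrt ((csize c a)%:R / dd a) * Num.sqrt ((csize c b)%:R / dd b)) ->
  (Lbar (EAg c x y) (degmx (EAg c x y)) + tau%:M) *m Theta c = Theta c *m C.
Proof.
move=> hc hd hr hC.
rewrite (Mform _ _ _ _ hd hr) Theta_Z.
set Sd := diag_mx (\row_i (Num.sqrt (dd i))^-1) : 'M[R]_k.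
set Nh := diag_mx (\row_i (Num.sqrt (csize c i)%:R)^-1) : 'M[R]_k.
have DhZY : forall p (Y : 'M[R]_(k, p)), Dh dd *m (Zm c *m Y) = Zm c *m (Sd *m Y).
  by move=> p Y; rewrite mulmxA /Dh (@diagZ R n k c (fun i => (Num.sqrt (dd i))^-1)) -mulmxA.
have ZtZY : forall p (Y : 'M[R]_(k, p)), (Zm c)^T *m (Zm c *m Y) = diag_mx (\row_i ((csize c i)%:R : R)) *m Y.
  by move=> p Y; rewrite mulmxA ZtZ.
rewrite !mulmxDl mulNmx mul_scalar_mx -scalemxAl -!mulmxA !(DhZY, ZtZY).
rewrite !scalemxAr -mulmxN -!mulmxDr; congr (_ *m _).
rewrite /Sd /Nh !mulmx_diag mul_mx_diag !mul_diag_mx.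
apply/matrixP => a b; rewrite !mxE hC.
have pn : forall i, 0 < ((csize c i)%:R : R) by move=> i; rewrite ltr0n csize_pos.
rewrite !sqrtrM ?(ltW (pn _)) // !sqrtrV ?(ltW (hd _)) //.
have Ha := sqr_sqrtr (ltW (pn a)); have Hd := sqr_sqrtr (ltW (hd a)).
have sa0 : Num.sqrt ((csize c a)%:R : R) != 0 by rewrite sqrtr_eq0 -ltNge pn.
have sd0 : Num.sqrt (dd a) != 0 by rewrite sqrtr_eq0 -ltNge hd.
case: (eqVneq a b) => [<-|nab] /=.
  rewrite mulr1n.
  set sa := Num.sqrt ((csize c a)%:R : R) in Ha sa0 *.
  set sd := Num.sqrt (dd a) in Hd sd0 *.
  clearbody sa sd.
  rewrite -Ha -Hd. field.
  by rewrite sa0 sd0.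
have Hb := sqr_sqrtr (ltW (pn b)); have Hdb := sqr_sqrtr (ltW (hd b)).
have sb0 : Num.sqrt ((csize c b)%:R : R) != 0 by rewrite sqrtr_eq0 -ltNge pn.
have sdb0 : Num.sqrt (dd b) != 0 by rewrite sqrtr_eq0 -ltNge hd.
rewrite !mulr0n.
set sa := Num.sqrt ((csize c a)%:R : R) in Ha sa0 *.
set sd := Num.sqrt (dd a) in Hd sd0 *.
set sb := Num.sqrt ((csize c b)%:R : R) in Hb sb0 *.
set sdb := Num.sqrt (dd b) in Hdb sdb0 *.
clearbody sa sd sb sdb.
rewrite -Hb. field.
by rewrite sa0 sd0 sb0 sdb0 gt_eqF. 
Qed.

Lemma MV x y (dd : 'I_k -> R) tau (m' : nat) (V : 'M[R]_(n, m')) (g : 'I_m' -> 'I_k) :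
  (forall i, 0 < dd i) ->
  (forall j, \sum_j' EAg c x y j j' = dd (c j)) ->
  (forall j l, V j l != 0 -> c j = g l) ->
  (Zm c)^T *m V = 0 ->
  (Lbar (EAg c x y) (degmx (EAg c x y)) + tau%:M) *m V =
  V *m diag_mx (\row_l (1 + tau + x / dd (g l))).
Proof.
move=> hd hr hV hZV.
have diagV : forall f : 'I_k -> R,
    diag_mx (\row_j f (c j)) *m V = V *m diag_mx (\row_l f (g l)).
  move=> f; rewrite mul_diag_mx mul_mx_diag; apply/matrixP => j l; rewrite !mxE.
  case: (eqVneq (V j l) 0) => [->|nz]; first by rewrite mulr0 mul0r.
  by rewrite (hV j l nz) mulrC.
have DV : Dh dd *m V = V *m diag_mx (\row_l (Num.sqrt (dd (g l)))^-1).
  exact: (diagV (fun i => (Num.sqrt (dd i))^-1)).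
rewrite (Mform _ _ _ _ hd hr) !mulmxDl mulNmx mul_scalar_mx -scalemxAl -!mulmxA.
rewrite DV (mulmxA (Zm c)^T) hZV mul0mx !mulmx0 oppr0 addr0.
rewrite mulmxA DV -mulmxA -mul_mx_scalar scalemxAr -mulmxDr; congr (_ *m _).
rewrite mulmx_diag; apply/matrixP => a b; rewrite !mxE.
case: (a == b); last by rewrite !mulr0n mulr0 addr0.
rewrite !mulr1n -expr2 exprVn sqr_sqrtr ?(ltW (hd _)) //.
Qed.

End Lap.


Section PD.
Variable R : realType.

Lemma quadC k (u : 'cV[R]_k) (be : 'rV[R]_k) y (v : 'cV[R]_k) :
  (v^T *m (- y *: (u *m u^T) + diag_mx be) *m v) 0 0 =
  - y * (\sum_a u a 0 * v a 0) ^+ 2 + \sum_a be 0 a * v a 0 ^+ 2.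
Proof.
rewrite mulmxDr mulmxDl addE00 -scalemxAr -scalemxAl scaleE00.
congr (_ + _).
  congr (_ * _).
  have -> : v^T *m (u *m u^T) *m v = (v^T *m u) *m (u^T *m v) by rewrite !mulmxA.
  rewrite mxE big_ord1.
  have E : forall w : 'cV[R]_k, (w^T *m u) 0 0 = \sum_a u a 0 * w a 0.
    by move=> w; rewrite mxE; apply: eq_bigr => a _; rewrite mxE mulrC.
  rewrite expr2 E; congr (_ * _).
  by rewrite -E -[(u^T *m v)]trmxK trmx_mul trmxK mxE.
rewrite mul_mx_diag mxE; apply: eq_bigr => a _; rewrite !mxE.
by rewrite mulrAC -expr2 mulrC.
Qed.

Lemma cs_bound k (u : 'cV[R]_k) (be : 'rV[R]_k) (v : 'cV[R]_k) :
  (forall a, 0 < be 0 a) ->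
  (\sum_a u a 0 * v a 0) ^+ 2 <= (\sum_a u a 0 ^+ 2 / be 0 a) * \sum_a be 0 a * v a 0 ^+ 2.
Proof.
move=> hb.
set A := \sum_a u a 0 * v a 0.
set s := \sum_a u a 0 ^+ 2 / be 0 a.
set B := \sum_a be 0 a * v a 0 ^+ 2.
have s0 : 0 <= s by apply: sumr_ge0 => a _; apply: divr_ge0; [apply: sqr_ge0|apply: ltW].
have B0 : 0 <= B by apply: sumr_ge0 => a _; apply: mulr_ge0; [apply: ltW|apply: sqr_ge0].
have key : forall t, 0 <= B - 2 * t * A + t ^+ 2 * s.
  move=> t.
  have -> : B - 2 * t * A + t ^+ 2 * s = \sum_a be 0 a * (v a 0 - t * u a 0 / be 0 a) ^+ 2.
    rewrite /B /A /s mulr_sumr mulr_sumr -sumrB -big_split /=.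
    apply: eq_bigr => a _; have := hb a; move: (be 0 a) => b hb0.
    field; by rewrite gt_eqF.
  by apply: sumr_ge0 => a _; apply: mulr_ge0; [apply: ltW|apply: sqr_ge0].
clearbody A s B.
have [sz|sp] := eqVneq s 0.
  subst s; have [->|An] := eqVneq A 0; first by rewrite expr0n /= mul0r.
  have := key ((B + 1) / (2 * A)); rewrite mulr0 addr0.
  have -> : B - 2 * ((B + 1) / (2 * A)) * A = - 1 by field; rewrite An.
  by rewrite oppr_ge0 ler10.
have spos : 0 < s by rewrite lt_def sp s0.
have := key (A / s).
have -> : B - 2 * (A / s) * A + (A / s) ^+ 2 * s = B - A ^+ 2 / s by field; rewrite sp.
rewrite subr_ge0 ler_pdivrMr // mulrC; done.
Qed.

Lemma C_pd k (u : 'cV[R]_k) (be : 'rV[R]_k) y :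
  (forall a, 0 < be 0 a) -> 0 < y -> y * (\sum_a u a 0 ^+ 2 / be 0 a) < 1 ->
  [/\ (- y *: (u *m u^T) + diag_mx be)^T = - y *: (u *m u^T) + diag_mx be,
     psdmx (- y *: (u *m u^T) + diag_mx be) &
     (- y *: (u *m u^T) + diag_mx be) \in unitmx].
Proof.
move=> hb hy hs.
set C := - y *: (u *m u^T) + diag_mx be.
have Q : forall v : 'cV[R]_k, (0 <= (v^T *m C *m v) 0 0) /\ ((v^T *m C *m v) 0 0 = 0 -> v = 0).
  move=> v; rewrite /C quadC.
  have := cs_bound _ u be v hb.
  set A := \sum_a u a 0 * v a 0.
  set s := \sum_a u a 0 ^+ 2 / be 0 a.
  set B := \sum_a be 0 a * v a 0 ^+ 2.
  have B0 : 0 <= B by apply: sumr_ge0 => a _; apply: mulr_ge0; [apply: ltW|apply: sqr_ge0].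
  move=> cs.
  have hs' : y * s < 1 by [].
  have h1 : y * A ^+ 2 <= y * (s * B) by rewrite ler_pM2l.
  have h2 : B * (1 - y * s) <= - y * A ^+ 2 + B.
    have -> : B * (1 - y * s) = B - y * (s * B) by ring.
    lra.
  have h3 : 0 < 1 - y * s by lra.
  split; first by have := mulr_ge0 B0 (ltW h3); lra.
  move=> h.
  have Bz : B = 0.
    apply: le_anti; rewrite B0 andbT.
    have : B * (1 - y * s) <= 0 by lra.
    by rewrite pmulr_lle0.
  move: Bz; rewrite /B => /eqP; rewrite psumr_eq0; last first.
    by move=> a _; apply: mulr_ge0; [apply: ltW|apply: sqr_ge0].
  move=> /allP H; apply/matrixP => a b; rewrite ord1 mxE.
  have := H a (mem_index_enum _); rewrite /= mulf_eq0 sqrf_eq0 (gt_eqF (hb a)) /=.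
  by move/eqP.
have Csym : C^T = C.
  apply/matrixP => a b; rewrite /C !mxE !big_ord1 !mxE mulrC.
  case: (eqVneq a b) => [->|nab]; last by rewrite !mulr0n; ring.
  by rewrite !mulr1n; ring.
split => //; first by move=> v; case: (Q v).
rewrite -row_free_unit -kermx_eq0; apply/eqP/row_matrixP => i.
have h : row i (kermx C) *m C = 0 by rewrite -row_mul mulmx_ker row0.
have : (row i (kermx C))^T = 0.
  apply: (proj2 (Q _)).
  rewrite trmxK h mul0mx mxE; done.
by move/(congr1 trmx); rewrite trmxK trmx0 row0.
Qed.

End PD.


Section H.
Variable R : realType.

Lemma sqrtmx_spec m (A : 'M[R]_m) : A^T = A -> psdmx A ->
  [/\ (sqrtmx A)^T = sqrtmx A, psdmx (sqrtmx A) & sqrtmx A *m sqrtmx A = A].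
Proof.
move=> hA pA; rewrite /sqrtmx.
apply: (@epsilon_spec _ (inhabits 0) (fun S : 'M[R]_m => [/\ S^T = S, psdmx S & S *m S = A])).
exact: sqrt_exists.
Qed.

Lemma orth_sq m p (A : 'M[R]_(m, p)) : p = m -> A^T *m A = 1%:M -> A *m A^T = 1%:M.
Proof.
move=> epm h.
have r1 : (p <= \rank A)%N by apply: (@mulmx1_min_rank _ _ _ _ _ A^T 1%:M); rewrite mulmx1.
have rf : row_free A by rewrite /row_free eqn_leq rank_leq_row -{1}epm.
apply/eqP; rewrite -subr_eq0; apply/eqP; apply: (row_free_inj rf).
by rewrite mulmxBl -mulmxA h mulmx1 mul1mx subrr mul0mx.
Qed.

Lemma bd_mul m1 m2 (A A' : 'M[R]_m1) (D D' : 'M[R]_m2) :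
  block_mx A 0 0 D *m block_mx A' 0 0 D' = block_mx (A *m A') 0 0 (D *m D').
Proof. by rewrite mulmx_block !mulmx0 !mul0mx !addr0 !add0r. Qed.

Lemma bd_tr m1 m2 (A : 'M[R]_m1) (D : 'M[R]_m2) :
  (block_mx A 0 0 D)^T = block_mx A^T 0 0 D^T.
Proof. by rewrite tr_block_mx !trmx0. Qed.

Lemma bd_one m1 m2 : block_mx (1%:M : 'M[R]_m1) 0 0 (1%:M : 'M[R]_m2) = 1%:M.
Proof. by rewrite -scalar_mx_block. Qed.

Lemma psd_block m1 m2 (A : 'M[R]_m1) (D : 'M[R]_m2) : psdmx A -> psdmx D ->
  psdmx (block_mx A 0 0 D).
Proof.
move=> pA pD v; rewrite -(vsubmxK v) tr_col_mx.
rewrite mul_row_block !mulmx0 !addr0 !add0r mul_row_col addE00.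
by apply: addr_ge0; [apply: pA|apply: pD].
Qed.

Lemma conj_mul m p (W : 'M[R]_(m, p)) (X Y : 'M[R]_p) : W^T *m W = 1%:M ->
  W *m X *m W^T *m (W *m Y *m W^T) = W *m (X *m Y) *m W^T.
Proof.
by move=> h; rewrite !mulmxA -(mulmxA (W *m X)) h mulmx1.
Qed.

Lemma conj_sym m p (W : 'M[R]_(m, p)) (X : 'M[R]_p) : X^T = X ->
  (W *m X *m W^T)^T = W *m X *m W^T.
Proof. by move=> h; rewrite !trmx_mul trmxK h mulmxA. Qed.

Lemma conj_psd m p (W : 'M[R]_(m, p)) (X : 'M[R]_p) : psdmx X -> psdmx (W *m X *m W^T).
Proof.
move=> h v.
have -> : v^T *m (W *m X *m W^T) *m v = (W^T *m v)^T *m X *m (W^T *m v).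
  by rewrite trmx_mul trmxK !mulmxA.
by apply: h.
Qed.

End H.


Theorem mainTheorem9 (R : realType) (n k : nat) (c : 'I_n -> 'I_k)
  (p eta taup taum : R)
  (hn : (2 <= n)%N) (hk : (2 <= k)%N)
  (hp0 : 0 < p) (hp1 : p <= 1) (he0 : 0 <= eta) (he1 : eta < 1 / 2)
  (hc : forall i : 'I_k, exists j : 'I_n, c j = i)
  (htp : 0 < taup) (htm : 0 <= taum)
  (hdp : forall i : 'I_k, 0 < dp c p eta i)
  (hdm : forall i : 'I_k, 0 < dm c p eta i)
  (V : 'M[R]_(n, n - k)) (g : 'I_(n - k) -> 'I_k)
  (hVorth : V^T *m V = 1%:M)
  (hVspan : (V^T == kermx (Theta c))%MS)
  (hVsupp : forall (j : 'I_n) (l : 'I_(n - k)), V j l != 0 -> c j = g l)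
  (hgcount : forall i : 'I_k, #|[set l | g l == i]| = (csize c i).-1)
  (hgord : forall l l' : 'I_(n - k), (l <= l')%N -> (g l <= g l')%N)
  (Rot : 'M[R]_k) (lam : 'rV[R]_k)
  (hRorth : Rot^T *m Rot = 1%:M) (hRdet : \det Rot = 1)
  (hdec : invsqrtmx (Cm c p eta taup) *m Cp c p eta taum *m invsqrtmx (Cm c p eta taup)
          = Rot *m diag_mx lam *m Rot^T) :
  Tbar c p eta taup taum =
  row_mx (Theta c *m Rot) V
  *m block_mx (diag_mx lam) 0 0
       (diag_mx (\row_l (alphap c p eta taum (g l) / alpham c p eta taup (g l))))
  *m (row_mx (Theta c *m Rot) V)^T.
Proof.
have n0 : (n%:R : R) != 0 by rewrite pnatr_eq0 -lt0n (ltn_trans _ hn).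
have pn : forall i, 0 < ((csize c i)%:R : R) by move=> i; rewrite ltr0n (csize_pos _ _ _ hc).
have hkn : (k <= n)%N.
  have : (k%:R : R) <= n%:R.
    rewrite -(sum_csize R n k c).
    have <- : \sum_(i < k) (1 : R) = k%:R by rewrite sumr_const card_ord.
    by apply: ler_sum => i _; rewrite ler1n (csize_pos _ _ _ hc).
  by rewrite ler_nat.
have hrp : forall j, \sum_j' EAg c (p * (1 - eta)) (p * eta) j j' = dp c p eta (c j).
  by move=> j; rewrite rowsum /dp /sfrac; field.
have hrm : forall j, \sum_j' EAg c (p * eta) (p * (1 - eta)) j j' = dm c p eta (c j).
  by move=> j; rewrite rowsum /dm /sfrac; field.
have hVT : V^T *m Theta c = 0 by apply/sub_kermxP; move/andP: hVspan => [].
have hTV : (Theta c)^T *m V = 0 by rewrite -[V]trmxK -trmx_mul hVT trmx0.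
have Nd1 : diag_mx (\row_i Num.sqrt ((csize c i)%:R : R)) *m
           diag_mx (\row_i (Num.sqrt ((csize c i)%:R : R))^-1) = 1%:M.
  rewrite mulmx_diag -diag_const_mx; congr diag_mx; apply/matrixP => a b.
  by rewrite !mxE divff // sqrtr_eq0 -ltNge pn.
have hZV : (Zm c)^T *m V = 0.
  have E1 : diag_mx (\row_i Num.sqrt ((csize c i)%:R : R)) *m (Theta c)^T = (Zm c)^T.
    by rewrite Theta_Z trmx_mul tr_diag_mx mulmxA Nd1 mul1mx.
  by rewrite -E1 -mulmxA hTV mulmx0.
have hTT : (Theta c)^T *m Theta c = 1%:M :> 'M[R]_k.
  rewrite Theta_Z trmx_mul tr_diag_mx -mulmxA (mulmxA (Zm c)^T) ZtZ mulmx_diag mulmx_diag.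
  rewrite -diag_const_mx; congr diag_mx; apply/matrixP => a b; rewrite !mxE.
  have s0 : Num.sqrt ((csize c b)%:R : R) != 0 by rewrite sqrtr_eq0 -ltNge pn.
  rewrite -{2}(sqr_sqrtr (ltW (pn b))); by field.
have hCp : forall a b, Cp c p eta taum a b = (a == b)%:R *
    (1 + taum + (p * (1 - eta) - (csize c a)%:R * (p * (1 - eta) - p * eta)) / dp c p eta a)
    - p * eta * Num.sqrt ((csize c a)%:R / dp c p eta a) * Num.sqrt ((csize c b)%:R / dp c p eta b).
  move=> a b; rewrite /Cp !mxE big_ord1 !mxE.
  have d0 := gt_eqF (hdp a).
  by case: (a == b); rewrite ?mulr1n ?mulr0n /=; field; rewrite d0.
have hCm : forall a b, Cm c p eta taup a b = (a == b)%:R *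
    (1 + taup + (p * eta - (csize c a)%:R * (p * eta - p * (1 - eta))) / dm c p eta a)
    - p * (1 - eta) * Num.sqrt ((csize c a)%:R / dm c p eta a) * Num.sqrt ((csize c b)%:R / dm c p eta b).
  move=> a b; rewrite /Cm !mxE big_ord1 !mxE.
  have d0 := gt_eqF (hdm a).
  by case: (a == b); rewrite ?mulr1n ?mulr0n /=; field; rewrite d0.
have MpT : (Lbarp c p eta + taum%:M) *m Theta c = Theta c *m Cp c p eta taum :=
  @MTheta R n k c (p * (1 - eta)) (p * eta) (dp c p eta) taum (Cp c p eta taum) hc hdp hrp hCp.
have MmT : (Lbarm c p eta + taup%:M) *m Theta c = Theta c *m Cm c p eta taup :=
  @MTheta R n k c (p * eta) (p * (1 - eta)) (dm c p eta) taup (Cm c p eta taup) hc hdm hrm hCm.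
have MpV : (Lbarp c p eta + taum%:M) *m V = V *m diag_mx (\row_l alphap c p eta taum (g l)) :=
  @MV R n k c (p * (1 - eta)) (p * eta) (dp c p eta) taum _ V g hdp hrp hVsupp hZV.
have MmV : (Lbarm c p eta + taup%:M) *m V = V *m diag_mx (\row_l alpham c p eta taup (g l)) :=
  @MV R n k c (p * eta) (p * (1 - eta)) (dm c p eta) taup _ V g hdm hrm hVsupp hZV.
pose W := row_mx (Theta c) V.
have hWW : W^T *m W = 1%:M.
  by rewrite /W tr_row_mx mul_col_row hTT hTV hVT hVorth bd_one.
have hWW' : W *m W^T = 1%:M by apply: orth_sq => //; rewrite subnKC.
have hMp : Lbarp c p eta + taum%:M =
    W *m block_mx (Cp c p eta taum) 0 0 (diag_mx (\row_l alphap c p eta taum (g l))) *m W^T.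
  have MW : (Lbarp c p eta + taum%:M) *m W =
      W *m block_mx (Cp c p eta taum) 0 0 (diag_mx (\row_l alphap c p eta taum (g l))).
    by rewrite /W mul_mx_row MpT MpV mul_row_block !mulmx0 addr0 add0r.
  by rewrite -[LHS]mulmx1 -hWW' mulmxA MW.
have hMm : Lbarm c p eta + taup%:M =
    W *m block_mx (Cm c p eta taup) 0 0 (diag_mx (\row_l alpham c p eta taup (g l))) *m W^T.
  have MW : (Lbarm c p eta + taup%:M) *m W =
      W *m block_mx (Cm c p eta taup) 0 0 (diag_mx (\row_l alpham c p eta taup (g l))).
    by rewrite /W mul_mx_row MmT MmV mul_row_block !mulmx0 addr0 add0r.
  by rewrite -[LHS]mulmx1 -hWW' mulmxA MW.
pose be := \row_i (1 + taup + p / dm c p eta i * (eta + (csize c i)%:R * (1 - 2 * eta))).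
have hb : forall a, 0 < be 0 a.
  move=> a; rewrite mxE.
  have : 0 <= p / dm c p eta a * (eta + (csize c a)%:R * (1 - 2 * eta)).
    apply: mulr_ge0; first by apply: divr_ge0; [apply: ltW|apply: ltW].
    apply: addr_ge0 => //; apply: mulr_ge0; [apply: ltW; apply: pn|lra].
  move=> h; apply: (@lt_le_trans _ _ (1 + taup)); first by lra.
  by rewrite lerDl.
have hy : 0 < p * (1 - eta) by apply: mulr_gt0 => //; lra.
have i0 : 'I_k := Ordinal (leq_trans (isT : (0 < 2)%N) hk).
have hs : p * (1 - eta) * (\sum_a um c p eta a 0 ^+ 2 / be 0 a) < 1.
  rewrite mulr_sumr.
  apply: (@lt_le_trans _ _ (\sum_a ((csize c a)%:R / n%:R))).
    apply: ltr_sum; first by apply/hasP; exists i0; rewrite ?mem_index_enum.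
    move=> a _; rewrite !mxE sqr_sqrtr; last by apply: divr_ge0; apply: ltW.
    have d0 := hdm a; have N0 := pn a.
    have nn : (0 : R) < n%:R by rewrite lt_def n0 ler0n.
    rewrite -subr_gt0.
    have -> : (csize c a)%:R / n%:R - p * (1 - eta) * ((csize c a)%:R / dm c p eta a /
      (1 + taup + p / dm c p eta a * (eta + (csize c a)%:R * (1 - 2 * eta)))) =
      (csize c a)%:R * taup * dm c p eta a / (n%:R * (taup * dm c p eta a + p * n%:R * (1 - eta))).
      have dmE : dm c p eta a = p * (n%:R * (1 - eta) - (csize c a)%:R * (1 - 2 * eta) - eta).
        by rewrite /dm /sfrac; field.
      have pe : 0 < p * (n%:R * (1 - eta) - (csize c a)%:R * (1 - 2 * eta) - eta) by rewrite -dmE.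
      have e0 : 0 < n%:R * (1 - eta) - (csize c a)%:R * (1 - 2 * eta) - eta.
        by move: pe; rewrite pmulr_rgt0.
      have h1e : 0 < 1 - eta by lra.
      have h12 : 0 <= 1 - 2 * eta by lra.
      rewrite dmE; field.
      apply/and5P; split; apply: lt0r_neq0 => //.
        apply: addr_gt0; first by apply: mulr_gt0.
        by apply: mulr_gt0 => //; apply: mulr_gt0.
      have h5a : 0 < (1 + taup) * (n%:R * (1 - eta) - (csize c a)%:R * (1 - 2 * eta) - eta).
        by apply: mulr_gt0 => //; lra.
      have h5b : 0 <= (csize c a)%:R * (1 - 2 * eta) by apply: mulr_ge0 => //; apply: ltW.
      lra.
    have h1e : 0 < 1 - eta by lra.
    apply: divr_gt0; first by apply: mulr_gt0 => //; apply: mulr_gt0.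
    apply: mulr_gt0 => //; apply: addr_gt0; first by apply: mulr_gt0.
    by apply: mulr_gt0 => //; apply: mulr_gt0.
  by rewrite -mulr_suml (sum_csize R n k c) divff.
have [CmS CmP CmU] : [/\ (Cm c p eta taup)^T = Cm c p eta taup,
    psdmx (Cm c p eta taup) & Cm c p eta taup \in unitmx].
  exact: (@C_pd R k (um c p eta) be (p * (1 - eta)) hb hy hs).
have [ScS ScP ScSq] := sqrtmx_spec _ _ _ CmS CmP.
rewrite /invsqrtmx in hdec.
set Sc := sqrtmx (Cm c p eta taup) in ScS ScP ScSq hdec.
have ScU : Sc \in unitmx by move: CmU; rewrite -ScSq unitmx_mul => /andP[].
have ham : forall l, 0 < alpham c p eta taup (g l).
  move=> l; rewrite /alpham.
  have : 0 <= p * eta / dm c p eta (g l).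
    by apply: divr_ge0; [apply: mulr_ge0 => //; apply: ltW|apply: ltW].
  move=> h; apply: (@lt_le_trans _ _ (1 + taup)); first by lra.
  by rewrite lerDl.
pose Dsq := diag_mx (\row_l Num.sqrt (alpham c p eta taup (g l))).
pose Dsqi := diag_mx (\row_l (Num.sqrt (alpham c p eta taup (g l)))^-1).
have hsq : sqrtmx (Lbarm c p eta + taup%:M) = W *m block_mx Sc 0 0 Dsq *m W^T.
  rewrite hMm; apply: sqrtmx_eq.
  - by apply: conj_sym; rewrite bd_tr ScS tr_diag_mx.
  - apply: conj_psd; apply: psd_block => //; apply: psd_diag => l.
    by rewrite mxE sqrtr_ge0.
  have DD : Dsq *m Dsq = diag_mx (\row_l alpham c p eta taup (g l)).
    rewrite mulmx_diag; congr diag_mx; apply/matrixP => a l.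
    by rewrite !mxE -expr2 sqr_sqrtr // ltW.
  by rewrite conj_mul // bd_mul ScSq DD.
have hinv : invsqrtmx (Lbarm c p eta + taup%:M) = W *m block_mx (invmx Sc) 0 0 Dsqi *m W^T.
  rewrite /invsqrtmx hsq; apply: inv_eq; rewrite conj_mul // bd_mul mulmxV //.
  have -> : Dsq *m Dsqi = 1%:M.
    rewrite mulmx_diag -diag_const_mx; congr diag_mx; apply/matrixP => a l.
    by rewrite !mxE divff // sqrtr_eq0 -ltNge.
  by rewrite bd_one mulmx1.
rewrite /Tbar hinv hMp !conj_mul // !bd_mul hdec.
have -> : row_mx (Theta c *m Rot) V = W *m block_mx Rot 0 0 1%:M.
  by rewrite /W mul_row_block !mulmx0 addr0 add0r mulmx1.
rewrite trmx_mul !mulmxA -!(mulmxA (W *m block_mx Rot 0 0 1%:M)).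
rewrite -(mulmxA W) -(mulmxA W) (mulmxA (block_mx Rot 0 0 1%:M)) bd_tr bd_mul bd_mul.
rewrite trmx1 mul1mx mulmx1 [Rot *m (diag_mx lam *m Rot^T)]mulmxA.
have DR : Dsqi *m diag_mx (\row_l alphap c p eta taum (g l)) *m Dsqi =
    diag_mx (\row_l (alphap c p eta taum (g l) / alpham c p eta taup (g l))).
  rewrite mulmx_diag mulmx_diag; congr diag_mx; apply/matrixP => a l; rewrite !mxE.
  have s0 : Num.sqrt (alpham c p eta taup (g l)) != 0 by rewrite sqrtr_eq0 -ltNge.
  rewrite -{3}(sqr_sqrtr (ltW (ham l))); by field.
by rewrite DR.
Qed.
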